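(* Let $G\in\mathfrak{Y}_n$ be a finite soluble non-nilpotent group, let $F$ be its Fitting subgroup, and let $p=|G:F|$ (a prime). Then the Sylow $p$-subgroups of $G$ are cyclic, and for every prime $r\neq p$ the Sylow $r$-subgroups of $G$ are abelian.
   Context: $\mathfrak{Y}_n$ denotes the class of all groups $G$ such that $N_G(A)=A$ for every non-abelian subgroup $A\le G$. The Fitting subgroup is the subgroup generated by all nilpotent normal subgroups. *)

(* Defs.v *)
From mathcomp Require Import all_boot all_fingroup all_solvable.
Set Implicit Arguments. Unset Strict Implicit. Unset Printing Implicit Defensive.
Local Open Scope group_scope.

Definition Yn (gT : finGroupType) (G : {group gT}) : Prop :=
  forall A : {group gT}, A \subset G -> ~~ abelian A -> 'N_G(A) = A.

(* Main.v *)
Require Import Defs.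
From mathcomp Require Import all_boot all_fingroup all_solvable.
Local Open Scope group_scope.

Theorem lemma2p7 (gT : finGroupType) (G : {group gT}) :
  Yn G -> solvable G -> ~~ nilpotent G ->
  let p := #|G : 'F(G)| in
  (forall P : {group gT}, P \in 'Syl_p(G) -> cyclic P) /\
  (forall (r : nat) (R : {group gT}), prime r -> r != p ->
     R \in 'Syl_r(G) -> abelian R).
Proof.
move=> YG solG nnilG p.
have nsFG : 'F(G) <| G := Fitting_normal G.
have sFG : 'F(G) \subset G := Fitting_sub G.
have keyab : forall M : {group gT}, M <| G -> M \proper G -> abelian M.
  move=> M nsMG prMG; apply/negPn/negP => nabM.
  have := YG M (normal_sub nsMG) nabM.
  rewrite (setIidPl (normal_norm nsMG)) => eGM.
  by move: prMG; rewrite properEneq eGM eqxx.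
have prFG : 'F(G) \proper G.
  rewrite properEneq sFG andbT; apply: contra nnilG => /eqP <-.
  exact: Fitting_nil.
have abF : abelian 'F(G) := keyab _ nsFG prFG.
have maxF : maxnormal 'F(G) G G.
  apply/maxgroupP; split; first by rewrite prFG normal_norm.
  move=> M /andP[prMG nMG] sFM; apply/eqP; rewrite eqEsubset sFM andbT.
  apply: Fitting_max; first by rewrite /normal proper_sub.
  by apply: abelian_nil; apply: keyab => //; rewrite /normal proper_sub.
have p_pr : prime p := index_maxnormal_sol_prime solG maxF.
have cardG : #|G| = (#|'F(G)| * p)%N by rewrite /p Lagrange.
split; last first.
  move=> r R r_pr neq_rp; rewrite inE => sylR.
  have sylFR := Sylow_setI_normal nsFG sylR.
  have eq : #|'F(G) :&: R| = #|R|.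
    rewrite (card_Hall sylFR) (card_Hall sylR) cardG partnM ?cardG_gt0 ?prime_gt0 //.
    rewrite (@part_p'nat r p) ?muln1 //.
    by rewrite pnatE // !inE eq_sym.
  have sRF : R \subset 'F(G).
    apply/setIidPr/eqP; rewrite eqEcard subsetIr eq leqnn.
    done.
  exact: abelianS sRF abF.
move=> P; rewrite inE => sylP.
have sPG := pHall_sub sylP.
have pP := pHall_pgroup sylP.
have nsPF : ~~ (P \subset 'F(G)).
  apply/negP => sPF.
  case/and3P: (sylP) => _ _ p'iP.
  have := pnat_dvd (indexgS G sPF) p'iP.
  by rewrite pnatE // !inE eqxx.
have [x Px nFx] := subsetPn nsPF.
set Q := 'O_p^'('F(G)).
have nsQG : Q <| G := gFnormal_trans _ nsFG.
have sQF : Q \subset 'F(G) := pcore_sub _ _.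
have hallQ : p^'.-Hall('F(G)) Q := nilpotent_pcore_Hall _ (Fitting_nil G).
have tiQP : Q :&: P = 1.
  apply: coprime_TIg; rewrite coprime_sym; apply: (pnat_coprime pP).
  exact: pcore_pgroup.
have QPG : Q * P = G.
  have cQ : #|Q| = (#|'F(G)|`_p^')%N := card_Hall hallQ.
  apply/eqP; rewrite eqEcard mul_subG ?(normal_sub nsQG) //= (TI_cardMg tiQP).
  rewrite cQ (card_Hall sylP) cardG partnM ?cardG_gt0 ?prime_gt0 //.
  rewrite (part_pnat_id (pnat_id p_pr)) mulnA [(_`_p^' * _)%N]mulnC partnC ?cardG_gt0 //.
have ncQ : forall y, y \in P -> y \notin 'F(G) -> ~~ (<[y]> \subset 'C(Q)).
  move=> y Py nFy; apply/negP => cQy.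
  have sFyG : 'F(G) <*> <[y]> \subset G by rewrite join_subG sFG cycle_subG (subsetP sPG).
  have eFyG : 'F(G) <*> <[y]> = G.
    apply/eqP; apply: contraR nFy => neq.
    have maxF' := p_index_maximal sFG p_pr.
    have [_ mx] := maxgroupP maxF'.
    have eF := mx ('F(G) <*> <[y]>)%G.
    rewrite /= properEneq neq sFyG joing_subl in eF.
    move/(_ isT isT): eF => eF.
    have : <[y]> \subset 'F(G) <*> <[y]> by exact: joing_subr.
    by rewrite eF cycle_subG.
  have cQG : G \subset 'C(Q).
    rewrite -eFyG join_subG cQy andbT.
    exact: sub_abelian_cent2 abF (subxx _) sQF.
  have nPG : G \subset 'N(P).
    rewrite -QPG mul_subG ?normG //; apply: cents_norm.
    by rewrite centsC (subset_trans sPG cQG).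
  have sPF : P \subset 'F(G).
    by apply: Fitting_max; [rewrite /normal sPG nPG | exact: pgroup_nil pP].
  by rewrite sPF in nsPF.
have nQx : <[x]> \subset 'N(Q).
  by rewrite cycle_subG (subsetP (normal_norm nsQG)) // (subsetP sPG).
have nabA : ~~ abelian (Q <*> <[x]>)%G.
  apply: contra (ncQ x Px nFx) => abA.
  exact: sub_abelian_cent2 abA (joing_subr _ _) (joing_subl _ _).
have sAG : (Q <*> <[x]>)%G \subset G.
  by rewrite join_subG normal_sub // cycle_subG (subsetP sPG).
have NA := YG _ sAG nabA.
have sNx : 'N_P(<[x]>) \subset <[x]>.
  have : 'N_P(<[x]>) \subset P :&: (Q <*> <[x]>).
    rewrite subsetI subsetIl /= -NA subsetI.
    rewrite (subset_trans (subsetIl _ _) sPG) /=.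
    apply: normsY; last exact: subsetIr.
    exact: subset_trans (subsetIl _ _) (subset_trans sPG (normal_norm nsQG)).
  by rewrite norm_joinEr // -group_modr ?cycle_subG // (setIC P Q) tiQP mul1g.
have sxP : <[x]> \subset P by rewrite cycle_subG.
case: (eqVproper sxP) => [ePx | prx]; first by rewrite -ePx cycle_cyclic.
have := nilpotent_proper_norm (pgroup_nil pP) prx.
by rewrite properE sNx andbF.
Qed.
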